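(* Let $n\ge2$, let $R$ be a commutative unital profinite ring, and let $G$ be a profinite group. Then $T^{\bar{\mathbb{U}}_n(R)}(G)=T^{\mathbb{U}_{n-1}(R)}(G)$.
   Context: For profinite groups $\mathbb{U}$ and $G$, $T^{\mathbb{U}}(G)$ denotes the intersection of the kernels of all continuous homomorphisms $G\to\mathbb{U}$. $\mathbb{U}_n(R)$ is the group of unipotent upper-triangular $(n+1)\times(n+1)$ matrices over $R$; $R^+$ embeds centrally in it via $r\mapsto I_{n+1}+rE_{1,n+1}$, and $\bar{\mathbb{U}}_n(R)=\mathbb{U}_n(R)/R^+$. *)

(* Defs.v *)
From HB Require Import structures.
From mathcomp Require Import all_boot all_order all_algebra.
From mathcomp Require Import all_classical topology.


Import GRing.Theory.
Local Open Scope classical_set_scope.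
Local Open Scope ring_scope.

#[short(type="topGroupType")]
HB.structure Definition TopGroup := {G of monoid.Group G & Topological G}.

Definition profinite_group (G : topGroupType) : Prop :=
  [/\ continuous (fun p : G * G => (p.1 * p.2)%g),
      continuous (fun x : G => (x^-1)%g),
      compact [set: G],
      hausdorff_space G &
      totally_disconnected [set: G]].

#[short(type="topComRingType")]
HB.structure Definition TopComRing := {R of GRing.ComPzRing R & Topological R}.

Definition profinite_ring (R : topComRingType) : Prop :=
  [/\ continuous (fun p : R * R => p.1 + p.2),
      continuous (fun p : R * R => p.1 * p.2),
      continuous (fun x : R => - x) &
      [/\ compact [set: R], hausdorff_space R &
          totally_disconnected [set: R]]].

Definition open_in {T : topologicalType} (S O : set T) : Prop :=
  exists2 O', open O' & O = O' `&` S.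

Section Unipotent.
Variable R : topComRingType.

(* U_m(R): unipotent upper-triangular (m+1)x(m+1) matrices, as a subset of
   'M[R]_(m.+1), carrying the subspace of the (product) matrix topology. *)
Definition Umx (m : nat) : set 'M[R]_(m.+1) :=
  [set A : 'M[R]_(m.+1) | (forall i j : 'I_(m.+1), (j < i)%N -> A i j = 0) /\
           (forall i : 'I_(m.+1), A i i = 1)].

Definition Rplus_emb (n : nat) (r : R) : 'M[R]_(n.+1) :=
  1%:M + r *: delta_mx 0 ord_max.

Definition Rplus_img (n : nat) : set 'M[R]_(n.+1) := range (Rplus_emb n).

Definition Rcoset (n : nat) (A : 'M[R]_(n.+1)) : set 'M[R]_(n.+1) :=
  [set A *m z | z in Rplus_img n].

(* Elements of \bar U_n(R) = U_n(R)/R^+ are the cosets A R^+, A in U_n(R). *)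
Definition Ubar_elt (n : nat) (X : set 'M[R]_(n.+1)) : Prop :=
  exists2 A, Umx n A & X = Rcoset n A.

Definition coset_mul (n : nat) (X Y : set 'M[R]_(n.+1)) : set 'M[R]_(n.+1) :=
  [set x *m y | x in X & y in Y].

Definition cont_hom_U (G : topGroupType) (m : nat) (f : G -> 'M[R]_(m.+1)) :
    Prop :=
  [/\ forall g, Umx m (f g),
      forall x y, f (x * y)%g = f x *m f y &
      continuous f].

(* Continuous homomorphisms G -> \bar U_n(R), where \bar U_n(R) carries the
   quotient topology: a set W of cosets is open iff its union (the preimage of
   W under the projection) is open in U_n(R). *)
Definition cont_hom_Ubar (G : topGroupType) (n : nat)
    (phi : G -> set 'M[R]_(n.+1)) : Prop :=
  [/\ forall g, Ubar_elt n (phi g),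
      forall x y, phi (x * y)%g = coset_mul n (phi x) (phi y) &
      forall W : set (set 'M[R]_(n.+1)),
        (forall X, W X -> Ubar_elt n X) ->
        open_in (Umx n) (\bigcup_(X in W) X) ->
        open (phi @^-1` W)].

Definition T_U (G : topGroupType) (m : nat) : set G :=
  [set g | forall f : G -> 'M[R]_(m.+1), cont_hom_U G m f -> f g = 1%:M].

(* T^{\bar U_n(R)}(G): the identity of \bar U_n(R) is the coset R^+. *)
Definition T_Ubar (G : topGroupType) (n : nat) : set G :=
  [set g | forall phi : G -> set 'M[R]_(n.+1), cont_hom_Ubar G n phi ->
           phi g = Rplus_img n].

End Unipotent.

(* Main.v *)
Require Import Defs.
From HB Require Import structures.
From mathcomp Require Import all_boot all_order all_algebra.
From mathcomp Require Import all_classical topology.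
Import GRing.Theory.
Local Open Scope classical_set_scope.
Local Open Scope ring_scope.

Section Alg.
Context {R : topComRingType}.
Context {m : nat}.
Local Notation M := 'M[R]_(m.+2).
Local Notation N := 'M[R]_(m.+1).
Local Notation emb := (Rplus_emb R m.+1).
Local Notation U := (Umx R m.+1).
Local Notation E := (delta_mx (0 : 'I_m.+2) (ord_max : 'I_m.+2) : M).

Lemma mulmx_deltaE (A : M) (i j k l : 'I_m.+2) : (A *m delta_mx i j) k l = A k i * (l == j)%:R.
Proof.
rewrite !mxE (bigD1 i) //= mxE eqxx /= big1 ?addr0 // => p /negPf pi.
by rewrite mxE pi mulr0.
Qed.

Lemma delta_mulmxE (A : M) (i j k l : 'I_m.+2) : (delta_mx i j *m A) k l = (k == i)%:R * A j l.
Proof.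
rewrite !mxE (bigD1 j) //= mxE eqxx andbT big1 ?addr0 // => p /negPf pj.
by rewrite mxE pj andbF mul0r.
Qed.

Lemma max_neq0 : (ord_max : 'I_m.+2) != 0.
Proof. by []. Qed.

Lemma EE : E *m E = 0.
Proof. by rewrite mul_delta_mx_cond eqE /= mulr0n. Qed.

Lemma emb0 : emb 0 = 1%:M.
Proof. by rewrite /Rplus_emb scale0r addr0. Qed.

Lemma embD r s : emb r *m emb s = emb (r + s).
Proof.
rewrite /Rplus_emb mulmxDl !mulmxDr !mul1mx mulmx1 -!scalemxAl.
rewrite -!scalemxAr mul_delta_mx_cond.
have -> : (ord_max == 0 :> 'I_m.+2) = false by [].
rewrite mulr0n !scaler0 addr0 scalerDl -addrA. by rewrite [s *: _ + _]addrC.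
Qed.

Lemma U_E_comm (A : M) : U A -> A *m E = E /\ E *m A = E.
Proof.
move=> [Al Ad]; split; apply/matrixP => k l.
  rewrite mulmx_deltaE mxE; case: (eqVneq k 0) => [->|k0].
    by rewrite Ad mul1r.
  rewrite Al ?mul0r ?andFb //.
  by rewrite lt0n; apply: contra k0 => /eqP k0; apply/eqP/val_inj.
rewrite delta_mulmxE mxE; case: (eqVneq l ord_max) => [->|lm].
  by rewrite Ad mulr1 andbT.
rewrite Al ?mulr0 ?andbF //.
have := ltn_ord l; rewrite ltnS leq_eqVlt => /orP[/eqP h|//].
by case/eqP: lm; apply/val_inj.
Qed.

Lemma emb_comm (A : M) r : U A -> emb r *m A = A *m emb r.
Proof.
move=> /U_E_comm [h1 h2].
by rewrite /Rplus_emb mulmxDl mulmxDr mul1mx mulmx1 -scalemxAl -scalemxAr h1 h2.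
Qed.

Lemma Rcoset_mem (A : M) : Rcoset R m.+1 A A.
Proof. by exists (emb 0); [exists 0|rewrite emb0 mulmx1]. Qed.

Lemma Rcoset_emb (A : M) r : Rcoset R m.+1 (A *m emb r) = Rcoset R m.+1 A.
Proof.
apply/seteqP; split=> X [z [s _ <-] <-].
  by exists (emb (r + s)); [exists (r + s)|rewrite -embD mulmxA].
exists (emb (s - r)); first by exists (s - r).
by rewrite -mulmxA embD addrC subrK.
Qed.

Lemma Rcoset_memE (A B : M) : Rcoset R m.+1 A B -> Rcoset R m.+1 B = Rcoset R m.+1 A.
Proof. by move=> [z [r _ <-] <-]; rewrite Rcoset_emb. Qed.

Lemma coset_mulE (A B : M) : U A -> U B ->
  coset_mul R m.+1 (Rcoset R m.+1 A) (Rcoset R m.+1 B) = Rcoset R m.+1 (A *m B).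
Proof.
move=> UA UB; apply/seteqP; split=> X.
  move=> [x [z1 [r1 _ <-] <-]] [y [z2 [r2 _ <-] <-]] <-.
  exists (emb (r1 + r2)); first by exists (r1 + r2).
  by rewrite -embD !mulmxA -(mulmxA A) -(mulmxA A (emb r1)) emb_comm.
move=> [z zR <-]; exists A; first exact: Rcoset_mem.
by exists (B *m z); [exists z|rewrite mulmxA].
Qed.

Lemma U_mul_emb (A : M) r : U A -> U (A *m emb r).
Proof.
move=> [Al Ad]; rewrite /Rplus_emb mulmxDr mulmx1 -scalemxAr; split.
  move=> i j ji; rewrite mxE mxE mulmx_deltaE (Al i j ji) (Al i 0).
    by rewrite mul0r mulr0 addr0.
  exact: leq_ltn_trans (leq0n j) ji.
move=> i; rewrite mxE mxE mulmx_deltaE Ad.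
have [->|_] := eqVneq i ord_max.
  by rewrite (Al ord_max 0) // mul0r mulr0 addr0.
by rewrite mulr0n mulr0 mulr0 addr0.
Qed.

Lemma U_one : U 1%:M.
Proof.
split=> [i j ji|i]; rewrite mxE ?eqxx //.
by case: eqP => // ij; rewrite ij ltnn in ji.
Qed.


Definition Ps (s : 'I_m.+2) (A : M) : N := \matrix_(i, j) A (lift s i) (lift s j).

Definition good (s : 'I_m.+2) := s = 0 \/ s = ord_max.

Lemma lift_lt (s : 'I_m.+2) (i j : 'I_m.+1) : (lift s j < lift s i)%N = (j < i)%N.
Proof. by rewrite /= !ltnNge leq_bump2. Qed.

Lemma Ps_U s A : U A -> Umx R m (Ps s A).
Proof.
move=> [Al Ad]; split=> [i j ji|i]; rewrite mxE ?Ad //.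
by rewrite Al // lift_lt.
Qed.

Lemma lift0_gt0 (i : 'I_m.+1) : (0 < lift (0%R : 'I_m.+2) i)%N.
Proof. by rewrite /= /bump leq0n. Qed.

Lemma lift_max_lt (i : 'I_m.+1) : (lift (ord_max : 'I_m.+2) i < m.+1)%N.
Proof. by rewrite lift_max. Qed.

Lemma Ps_mul s A B : good s -> U A -> U B -> Ps s (A *m B) = Ps s A *m Ps s B.
Proof.
move=> gs [Al Ad] [Bl Bd]; apply/matrixP => i j.
rewrite mxE [RHS]mxE mxE (bigD1_ord s) //=.
have -> : A (lift s i) s * B s (lift s j) = 0.
  case: gs => ->; first by rewrite Al ?mul0r // lift0_gt0.
  by rewrite (Bl ord_max (lift ord_max j)) ?mulr0 // lift_max_lt.
by rewrite add0r; apply: eq_bigr => k _; rewrite !mxE.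
Qed.

Lemma Ps_emb s A r : good s -> U A -> Ps s (A *m emb r) = Ps s A.
Proof.
move=> gs [Al Ad]; apply/matrixP => i j.
rewrite /Rplus_emb mulmxDr mulmx1 -scalemxAr [RHS]mxE mxE mxE mxE mulmx_deltaE.
case: gs => ->.
  by rewrite (Al _ 0) ?mul0r ?mulr0 ?addr0 // lift0_gt0.
have -> : (lift ord_max j == ord_max :> 'I_m.+2) = false.
  by apply/negbTE; rewrite eq_sym neq_lift.
by rewrite mulr0n mulr0 mulr0 addr0.
Qed.

Lemma Ps_one s : Ps s 1%:M = 1%:M.
Proof.
apply/matrixP => i j; rewrite !mxE; congr (_%:R).
by rewrite (inj_eq (@lift_inj _ s)).
Qed.

Lemma Ps_coset s A B : good s -> U A -> Rcoset R m.+1 A B -> Ps s B = Ps s A.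
Proof. by move=> gs UA [z [r _ <-] <-]; rewrite Ps_emb. Qed.

Definition ext (B : N) : M := \matrix_(i, j)
  match unlift 0 i, unlift 0 j with Some a, Some b => B a b | _, _ => (i == j)%:R end.

Lemma ext00 B : ext B 0 0 = 1.
Proof. by rewrite mxE unlift_none. Qed.
Lemma ext0l B (b : 'I_m.+1) : ext B 0 (lift 0 b) = 0.
Proof. by rewrite mxE unlift_none (negPf (@neq_lift m.+2 0 b)). Qed.
Lemma extl0 B (a : 'I_m.+1) : ext B (lift 0 a) 0 = 0.
Proof. by rewrite mxE liftK unlift_none eq_sym (negPf (@neq_lift m.+2 0 a)). Qed.
Lemma extll B (a b : 'I_m.+1) : ext B (lift 0 a) (lift 0 b) = B a b.
Proof. by rewrite mxE !liftK. Qed.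

Lemma Ps_ext B : Ps 0 (ext B) = B.
Proof. by apply/matrixP => i j; rewrite mxE extll. Qed.

Lemma ext_mul B C : ext (B *m C) = ext B *m ext C.
Proof.
apply/matrixP => i j; rewrite [RHS]mxE (bigD1_ord 0) //=.
case: (unliftP 0 i) => [a ->|->]; case: (unliftP 0 j) => [b ->|->].
- rewrite !extl0 mul0r add0r extll mxE; apply: eq_bigr => k _.
  by rewrite !extll.
- rewrite !extl0 mul0r add0r big1 // => k _.
  by rewrite extl0 mulr0.
- rewrite !ext0l mulr0 add0r big1 // => k _.
  by rewrite ext0l mul0r.
- rewrite !ext00 mul1r big1 ?addr0 // => k _.
  by rewrite ext0l mul0r.
Qed.

Lemma ext_U B : Umx R m B -> U (ext B).
Proof.
move=> [Bl Bd]; split=> [i j|i].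
  case: (unliftP 0 i) => [a ->|->]; case: (unliftP 0 j) => [b ->|->].
  - by rewrite extll lift_lt => /Bl.
  - by rewrite extl0.
  - by rewrite ext0l.
  - by rewrite ltnn.
by case: (unliftP 0 i) => [a ->|->]; rewrite ?extll ?ext00.
Qed.

Lemma emb_char A : U A -> Ps 0 A = 1%:M -> Ps ord_max A = 1%:M ->
  A = emb (A 0 ord_max).
Proof.
move=> [Al Ad] P0 Pm.
have F1 : forall k l, k != 0 -> l != 0 -> A k l = (k == l)%:R.
  move=> k l; case: (unliftP 0 k) => [a ->|->]; last by rewrite eqxx.
  case: (unliftP 0 l) => [b ->|->]; last by rewrite eqxx.
  move=> _ _; have := P0; move/matrixP/(_ a b); rewrite !mxE => ->.
  by rewrite (inj_eq (@lift_inj _ _)).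
have F2 : forall k l, k != ord_max -> l != ord_max -> A k l = (k == l)%:R.
  move=> k l; case: (unliftP ord_max k) => [a ->|->]; last by rewrite eqxx.
  case: (unliftP ord_max l) => [b ->|->]; last by rewrite eqxx.
  move=> _ _; have := Pm; move/matrixP/(_ a b); rewrite !mxE => ->.
  by rewrite (inj_eq (@lift_inj _ _)).
have m0 : (ord_max : 'I_m.+2) != 0 by [].
apply/matrixP => k l; rewrite /Rplus_emb !mxE.
have [->|k0] := eqVneq k 0; have [->|lm] := eqVneq l ord_max.
- by rewrite eq_sym (negPf m0) mulr1 add0r.
- by rewrite F2 ?mulr0n ?mulr0 ?addr0 // eq_sym.
- by rewrite F1 ?mulr0n ?mulr0 ?addr0.
have [->|l0] := eqVneq l 0; last by rewrite F1 ?mulr0n ?mulr0 ?addr0.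
have [->|km] := eqVneq k ord_max; last by rewrite F2 ?mulr0n ?mulr0 ?addr0.
by rewrite Al // (negPf m0) mulr0n mulr0 addr0.
Qed.


Lemma Ps_cont s : continuous (Ps s).
Proof.
move=> A Q [P PA sub].
exists (fun k l => match unlift s k, unlift s l with
   Some a, Some b => P a b | _, _ => setT end).
  move=> k l; case: (unliftP s k) => [a ->|_]; case: (unliftP s l) => [b ->|_];
    rewrite ?liftK; try exact: filterT.
  by have := PA a b; rewrite mxE.
move=> B HB; apply: sub => a b; have := HB (lift s a) (lift s b).
by rewrite !liftK mxE.
Qed.

Lemma ext_cont : continuous ext.
Proof.
move=> B Q [P PA sub].
exists (fun a b => P (lift 0 a) (lift 0 b)).
  by move=> a b; have := PA (lift 0 a) (lift 0 b); rewrite extll.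
move=> C HC; apply: sub => k l.
case: (unliftP 0 k) => [a ->|->]; case: (unliftP 0 l) => [b ->|->].
- by rewrite extll; exact: HC.
- by have := nbhs_singleton (PA (lift 0 a) 0); rewrite !extl0.
- by have := nbhs_singleton (PA 0 (lift 0 b)); rewrite !ext0l.
- by have := nbhs_singleton (PA 0 0); rewrite !ext00.
Qed.

End Alg.

Lemma Rcoset1 (R : topComRingType) n : Rcoset R n 1%:M = Rplus_img R n.
Proof.
apply/seteqP; split=> X; first by move=> [z zR <-]; rewrite mul1mx.
by move=> XR; exists X => //; rewrite mul1mx.
Qed.

Theorem lemma8p1 (n : nat) (R : topComRingType) (G : topGroupType) :
  (2 <= n)%N -> profinite_ring R -> profinite_group G ->
  T_Ubar R G n = T_U R G n.-1.
Proof.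
case: n => [|[|m]] // _ _ _ /=.
apply/seteqP; split=> g.
- move=> Hg f [fU fM fC].
  pose phi x := Rcoset R m.+2 (ext (f x)).
  have phiC : cont_hom_Ubar R G m.+2 phi.
    split.
    + by move=> x; exists (ext (f x)) => //; apply: ext_U.
    + by move=> x y; rewrite /phi fM ext_mul coset_mulE //; apply: ext_U.
    + move=> W HW [O' oO' HO].
      have -> : phi @^-1` W = (ext \o f) @^-1` O'.
        apply/seteqP; split=> x /=.
          move=> Wx.
          have : (\bigcup_(X in W) X) (ext (f x)).
            by exists (phi x) => //; apply: Rcoset_mem.
          by rewrite HO => -[].
        move=> Ox.
        have : (O' `&` Umx R m.+2) (ext (f x)) by split => //; apply: ext_U.
        rewrite -HO => -[X WX Xx].
        have [A UA XA] := HW X WX.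
        by rewrite /phi (@Rcoset_memE _ _ A (ext (f x))) -?XA.
      move: oO'; apply: (proj1 (continuousP _)).
      by move=> x; apply: continuous_comp; [exact: fC | exact: ext_cont].
  have := Hg phi phiC; rewrite /phi => e.
  have : Rplus_img R m.+2 (ext (f g)) by rewrite -e; apply: Rcoset_mem.
  move=> [r _ er].
  by rewrite -(Ps_ext (f g)) -er -(mul1mx (Rplus_emb _ _ r)) Ps_emb ?Ps_one //;
    [left | exact: U_one].
- move=> Hg phi [pU pM pC].
  pose rep x := xget 1%:M [set A | Umx R m.+2 A /\ phi x = Rcoset R m.+2 A].
  have repP x : Umx R m.+2 (rep x) /\ phi x = Rcoset R m.+2 (rep x).
    have : exists A, Umx R m.+2 A /\ phi x = Rcoset R m.+2 A.
      by have [A UA ->] := pU x; exists A.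
    by move/(xgetPex 1%:M).
  have fC s : good s -> cont_hom_U R G m.+1 (fun x => Ps s (rep x)).
    move=> gs; split.
    + by move=> x; apply: Ps_U; case: (repP x).
    + move=> x y; have [Ux ex] := repP x; have [Uy ey] := repP y.
      have [Uxy exy] := repP (x * y)%g.
      rewrite -Ps_mul //; apply/esym/Ps_coset => //.
      rewrite -exy pM ex ey coset_mulE //; exact: Rcoset_mem.
    + apply: (proj2 (continuousP _)) => V oV.
      pose W := [set X | Ubar_elt R m.+2 X /\
        forall A, Umx R m.+2 A -> X = Rcoset R m.+2 A -> V (Ps s A)].
      have -> : (fun x => Ps s (rep x)) @^-1` V = phi @^-1` W.
        apply/seteqP; split=> x /=.
          move=> Vx; split; first exact: pU.
          move=> A UA eA; have [Ux ex] := repP x.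
          rewrite -(@Ps_coset _ _ s A (rep x) gs UA) //.
          by rewrite -eA ex; exact: Rcoset_mem.
        by move=> [_ HW]; have [Ux ex] := repP x; exact: HW.
      apply: pC; first by move=> X [].
      exists (Ps s @^-1` V); first by move: oV; apply: (proj1 (continuousP _)); exact: Ps_cont.
      apply/seteqP; split=> M.
        move=> [X [[A UA XA] HA] XM]; rewrite XA in XM.
        have [z [r _ ez] eM] := XM.
        split; last by rewrite -eM -ez; exact: U_mul_emb.
        by rewrite /= (Ps_coset _ _ _ gs UA XM); apply: HA.
      move=> [VM UM]; exists (Rcoset R m.+2 M); last exact: Rcoset_mem.
      split; first by exists M.
      move=> A UA eA; rewrite -(@Ps_coset _ _ s A M gs UA) //.
      by rewrite -eA; exact: Rcoset_mem.
  have [Ug eg] := repP g.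
  have h0 := Hg _ (fC 0 (or_introl erefl)).
  have hm := Hg _ (fC ord_max (or_intror erefl)).
  rewrite eg (emb_char _ Ug h0 hm) -(mul1mx (Rplus_emb _ _ _)) Rcoset_emb.
  exact: Rcoset1.
Qed.
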